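(* Let $D_1,\ldots,D_q\subseteq V\times V$ be demand graphs with $|D_i|=k$, reordered such that $\mathrm{mincut}_G(D_1)<\mathrm{mincut}_G(D_2)<\ldots<\mathrm{mincut}_G(D_q)$. Then the polynomials $P_{1}, P_{2}, \ldots, P_{q}$ are linearly independent.
   Context: $G=(V,E,w)$ is an undirected edge-weighted graph with $n=|V|$. For a partition $\Pi$ of $V$, $\Pi(v)$ is the part containing $v$, and $\mathrm{cut}_G(\Pi)=\sum_{uv\in E:\Pi(u)\neq\Pi(v)} w(uv)$. A partition agrees with (is feasible for) a demand graph $D$ if every $uv\in D$ has $\Pi(u)\neq\Pi(v)$, and $\mathrm{mincut}_G(D)$ is the minimum of $\mathrm{cut}_G(\Pi)$ over partitions agreeing with $D$. Each vertex $v$ gets a variable $\phi_v$ taking values in $[n]$ (a partition is instantiated by assigning each vertex a label of its part). For each demand graph $D_j$ define $P_j=\prod_{uv\in D_j}(\phi_u-\phi_v)$, a polynomial of degree $k$; a partition $\Pi$ is feasible for $D_j$ iff $P_j(\Pi)\neq 0$. *)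

(* Defs.v *)
From HB Require Import structures.
From mathcomp Require Import all_boot all_order all_algebra.
From mathcomp Require Import mpoly.
Set Implicit Arguments. Unset Strict Implicit. Unset Printing Implicit Defensive.
Import Order.TTheory GRing.Theory Num.Theory.
Local Open Scope ring_scope.

(* Vertex set V = 'I_n (so n = |V|).  The graph G = (V,E,w) is given by an
   edge relation E and a weight function w; an undirected edge {u,v} is
   counted once, via the representative with u < v. *)

(* A partition is instantiated by a labelling phi : V -> [n]. *)
Definition labelling (n : nat) := {ffun 'I_n -> 'I_n}.

Definition cut (R : numDomainType) (n : nat) (E : rel 'I_n) (w : 'I_n -> 'I_n -> R)
    (phi : labelling n) : R :=
  \sum_(u : 'I_n) \sum_(v : 'I_n | [&& (u < v)%N, E u v & phi u != phi v]) w u v.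

Definition feasible (n : nat) (D : {set 'I_n * 'I_n}) (phi : labelling n) : bool :=
  [forall e in D, phi e.1 != phi e.2].

Definition is_mincut (R : numDomainType) (n : nat) (E : rel 'I_n)
    (w : 'I_n -> 'I_n -> R) (D : {set 'I_n * 'I_n}) (m : R) : Prop :=
  (exists2 phi : labelling n, feasible D phi & cut E w phi = m) /\
  (forall phi : labelling n, feasible D phi -> m <= cut E w phi).

Definition demand_poly (R : ringType) (n : nat) (D : {set 'I_n * 'I_n})
    : {mpoly R[n]} :=
  \prod_(e in D) ('X_e.1 - 'X_e.2).

(* Main.v *)
Require Import Defs.
From HB Require Import structures.
From mathcomp Require Import all_boot all_order all_algebra.
From mathcomp Require Import mpoly.
Import Order.TTheory GRing.Theory Num.Theory.
Local Open Scope ring_scope.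

Lemma eval_demand (R : realFieldType) (n : nat) (D : {set 'I_n * 'I_n})
  (phi : labelling n) :
  meval (fun u => ((phi u : nat)%:R : R)) (demand_poly R D) = 0
  <-> ~~ feasible D phi.
Proof.
rewrite /demand_poly rmorph_prod /=.
under eq_bigr => e _ do rewrite mevalB !mevalXU.
split.
- move/eqP; rewrite prodf_seq_eq0 => /hasP [e] _ /andP [eD].
  rewrite subr_eq0 => /eqP /(congr1 (fun x : R => x)) h.
  apply/forallP => /(_ e); rewrite eD /= => /eqP; apply.
  by apply/val_inj/eqP; rewrite -(eqr_nat R) h.
- move=> /forallPn [e]; rewrite negb_imply => /andP [eD] /negPn /eqP he.
  apply/eqP; rewrite prodf_seq_eq0; apply/hasP; exists e; first by rewrite mem_index_enum.
  by rewrite eD he subrr eqxx.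
Qed.

Theorem lemma11 (R : realFieldType) (n : nat) (E : rel 'I_n)
    (w : 'I_n -> 'I_n -> R) (k q : nat) (D : 'I_q -> {set 'I_n * 'I_n})
    (m : 'I_q -> R)
    (hsize : forall i, #|D i| = k)
    (hmin : forall i, is_mincut E w (D i) (m i))
    (hinc : forall i j : 'I_q, (i < j)%N -> m i < m j) :
  forall c : 'I_q -> R,
    \sum_(i < q) c i *: demand_poly R (D i) = 0 -> forall i, c i = 0.
Proof.
move=> c hsum.
suff H : forall b (i : 'I_q), (i < b)%N -> c i = 0 by move=> i; exact: (H i.+1).
elim=> [//|b IH] i; rewrite ltnS leq_eqVlt => /orP [/eqP hib|]; last exact: IH.
have [[phi fphi cphi] _] := hmin i.
set v := fun u => ((phi u : nat)%:R : R).
have := congr1 (meval v) hsum.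
rewrite raddf_sum meval0 (bigD1 i) //= big1 ?addr0.
  rewrite mevalZ => /eqP; rewrite mulf_eq0 => /orP [/eqP //|/eqP].
  by move/eval_demand; rewrite fphi.
move=> j hji; rewrite mevalZ.
have [ltji|ltij|eqji] := ltngtP j i.
- by rewrite IH ?mul0r // -hib.
- suff /eval_demand -> : ~~ feasible (D j) phi by rewrite mulr0.
  apply/negP => fj; have [_ hj] := hmin j.
  have := hj _ fj; rewrite cphi leNgt => /negP; apply; exact: hinc.
- by move: hji; rewrite (val_inj eqji) eqxx.
Qed.
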